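(* Let $\Omega = [a,b)$ be a bounded interval with periodic boundary conditions, let $k \ge 0$ be an integer, let $T_k$ be the space of real-valued trigonometric polynomials on $\Omega$ of degree at most $k$, let $P$ denote the $L^2(\Omega)$-orthogonal projection onto $T_k$, and let $\beta \in \mathbb{R}$. Let $(v,w) \colon I \to T_k \times T_k$ (with $I$ an open time interval) be a continuously differentiable solution of the Fourier Galerkin semidiscretization of the nonlinear Schrödinger equation $\mathrm{i} u_t + u_{xx} + \beta |u|^2 u = 0$ written for $u = v + \mathrm{i} w$, \[ \begin{aligned} \partial_t v &= -w_{xx} - \beta P \bigl( (v^2 + w^2) w \bigr), \\ \partial_t w &= v_{xx} + \beta P \bigl( (v^2 + w^2) v \bigr). \end{aligned} \] Then the mass, momentum, and energy \[ \mathcal{M} = \int_\Omega ( v^2 + w^2 ) \,\mathrm{d}x, \qquad \mathcal{P} = \int_\Omega ( v w_x - w v_x ) \,\mathrm{d}x, \qquad \mathcal{E} = \int_\Omega \Bigl( v_x^2 + w_x^2 - \frac{\beta}{2} ( v^2 + w^2 )^2 \Bigr) \mathrm{d}x \] are constant in time along $(v,w)$.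
   Context: The semidiscretization is an ODE on the finite-dimensional space $T_k \times T_k$. *)

(* Defs.v *)
From Stdlib Require Import Reals Lra.
From Coquelicot Require Import Coquelicot.
Open Scope R_scope.

(* Real trigonometric basis on Omega = [a,b) (periodic, length L = b - a):
   index 0        : 1
   index 2j+1     : cos (2 pi (j+1) (x-a)/L)
   index 2j+2     : sin (2 pi (j+1) (x-a)/L)
   Indices 0 .. 2k span T_k (trig. polynomials of degree <= k).
   This basis is L^2(Omega)-orthogonal. *)
Definition trig_basis (a b : R) (n : nat) (x : R) : R :=
  match n with
  | O => 1
  | S m =>
      let freq := 2 * PI * INR (Nat.div2 m + 1) * (x - a) / (b - a) in
      if Nat.even m then cos freq else sin freq
  end.

Definition trig_poly (k : nat) (a b : R) (c : nat -> R) (x : R) : R :=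
  sum_n (fun n => c n * trig_basis a b n x) (2 * k).

(* L^2(Omega)-orthogonal projection onto T_k, expanded in the orthogonal
   basis trig_basis: P f = sum_n (<f,e_n>/<e_n,e_n>) e_n. *)
Definition L2proj (k : nat) (a b : R) (f : R -> R) (x : R) : R :=
  trig_poly k a b
    (fun n => RInt (fun y => f y * trig_basis a b n y) a b
              / RInt (fun y => trig_basis a b n y ^ 2) a b) x.

Definition in_open_interval (lo hi : Rbar) (t : R) : Prop :=
  Rbar_lt lo t /\ Rbar_lt t hi.

Definition mass (a b : R) (v w : R -> R) : R :=
  RInt (fun x => v x ^ 2 + w x ^ 2) a b.

Definition momentum (a b : R) (v w : R -> R) : R :=
  RInt (fun x => v x * Derive w x - w x * Derive v x) a b.

Definition energy (a b beta : R) (v w : R -> R) : R :=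
  RInt (fun x => Derive v x ^ 2 + Derive w x ^ 2
                 - beta / 2 * (v x ^ 2 + w x ^ 2) ^ 2) a b.

(* Main.v *)
Require Import Defs.
From Stdlib Require Import Reals Lra Lia Arith.
From Coquelicot Require Import Coquelicot.
Open Scope R_scope.

Ltac req := match goal with |- ?x = ?y => change (@eq R x y) end.

Section S1.
Variables (a b : R).
Hypothesis Hab : a < b.

Definition om (j : nat) := 2 * PI * INR (j + 1) / (b - a).

Lemma tb_S m x : trig_basis a b (S m) x =
  if Nat.even m then cos (om (Nat.div2 m) * (x - a)) else sin (om (Nat.div2 m) * (x - a)).
Proof.
  unfold trig_basis, om. assert (b - a <> 0) by lra.
  destruct (Nat.even m); f_equal; field; auto.
Qed.

Definition de (n : nat) (x : R) : R :=
  match n with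
  | O => 0
  | S m => if Nat.even m then - om (Nat.div2 m) * sin (om (Nat.div2 m) * (x - a))
           else om (Nat.div2 m) * cos (om (Nat.div2 m) * (x - a))
  end.

Lemma tb_deriv n x : is_derive (trig_basis a b n) x (de n x).
Proof.
  destruct n as [|m].
  - simpl. apply (is_derive_const 1).
  - apply is_derive_ext with (fun x => if Nat.even m then cos (om (Nat.div2 m) * (x - a)) else sin (om (Nat.div2 m) * (x - a))).
    + intros; now rewrite tb_S.
    + simpl. destruct (Nat.even m); auto_derive; auto; unfold Rminus; ring.
Qed.

Lemma om_per j : om j * (b - a) = 2 * INR (j+1) * PI.
Proof. unfold om. field. lra. Qed.

Lemma tb_per n : trig_basis a b n b = trig_basis a b n a.
Proof.
  destruct n as [|m]; auto. rewrite !tb_S. rewrite om_per. replace (a - a) with 0 by ring.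
  rewrite Rmult_0_r. replace (2 * INR (Nat.div2 m + 1) * PI) with (0 + 2 * INR (Nat.div2 m + 1) * PI) by ring.
  rewrite cos_period, sin_period. auto.
Qed.

Lemma de_per n : de n b = de n a.
Proof.
  destruct n as [|m]; auto. simpl. rewrite om_per. replace (a - a) with 0 by ring.
  rewrite Rmult_0_r. replace (2 * INR (Nat.div2 m + 1) * PI) with (0 + 2 * INR (Nat.div2 m + 1) * PI) by ring.
  rewrite cos_period, sin_period. auto.
Qed.

End S1.

Lemma sumS (f : nat -> R) n : sum_n f (S n) = sum_n f n + f (S n).
Proof. exact (sum_Sn f n). Qed.
Lemma sum0 (f : nat -> R) : sum_n f 0 = f 0%nat.
Proof. exact (sum_O f). Qed.

Fixpoint psum (g : nat -> R) (k : nat) : R :=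
  match k with O => 0 | S k' => psum g k' + g k' end.

Lemma sum_pairs (f : nat -> R) k : sum_n f (2 * k) = f 0%nat + psum (fun j => f (2 * j + 1)%nat + f (2 * j + 2)%nat) k.
Proof.
  induction k. simpl. rewrite sum0. ring.
  replace (2 * S k)%nat with (S (S (2 * k))) by lia.
  rewrite !sumS, IHk. simpl psum.
  replace (S (2 * k)) with (2 * k + 1)%nat by lia.
  replace (S (2 * k + 1)) with (2 * k + 2)%nat by lia. simpl. ring.
Qed.

Lemma psum_ext g h k : (forall j, (j < k)%nat -> g j = h j) -> psum g k = psum h k.
Proof. induction k; simpl; intros; auto. rewrite IHk, H; auto. Qed.

Lemma even2 j : Nat.even (2 * j) = true.
Proof. induction j; auto. replace (2 * S j)%nat with (S (S (2 * j))) by lia. simpl. auto. Qed.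
Lemma even2S j : Nat.even (2 * j + 1) = false.
Proof. induction j; auto. replace (2 * S j + 1)%nat with (S (S (2 * j + 1))) by lia. simpl. auto. Qed.
Lemma div22 j : Nat.div2 (2 * j) = j.
Proof. apply Nat.div2_double. Qed.
Lemma div22S j : Nat.div2 (2 * j + 1) = j.
Proof. rewrite Nat.add_1_r. apply Nat.div2_succ_double. Qed.

Section S2.
Variables (a b : R) (k : nat).
Hypothesis Hab : a < b.

Definition dc (c : nat -> R) (n : nat) : R :=
  match n with
  | O => 0
  | S m => if Nat.even m then om a b (Nat.div2 m) * c (S (S m)) else - om a b (Nat.div2 m) * c m
  end.

Definition dtp (c : nat -> R) (x : R) : R := sum_n (fun n => c n * de a b n x) (2 * k).

Lemma de_S m x : de a b (S m) x = if Nat.even m then - om a b (Nat.div2 m) * sin (om a b (Nat.div2 m) * (x - a))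
           else om a b (Nat.div2 m) * cos (om a b (Nat.div2 m) * (x - a)).
Proof. reflexivity. Qed.
Lemma dc_S c m : dc c (S m) = if Nat.even m then om a b (Nat.div2 m) * c (S (S m)) else - om a b (Nat.div2 m) * c m.
Proof. reflexivity. Qed.

Lemma dtp_tp c x : dtp c x = trig_poly k a b (dc c) x.
Proof.
  unfold dtp, trig_poly. rewrite !sum_pairs. f_equal. simpl. ring.
  apply psum_ext. intros j _.
  replace (2 * j + 1)%nat with (S (2 * j)) by lia.
  replace (2 * j + 2)%nat with (S (2 * j + 1)) by lia.
  rewrite !tb_S by auto. rewrite !de_S, !dc_S.
  rewrite even2, even2S, div22, div22S.
  replace (S (S (2 * j))) with (S (2 * j + 1)) by lia. rewrite Nat.add_1_r. ring.
Qed.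

Lemma tp_deriv c x : is_derive (trig_poly k a b c) x (dtp c x).
Proof.
  unfold trig_poly, dtp.
  apply (is_derive_sum_n (fun n y => c n * trig_basis a b n y)).
  intros. apply is_derive_scal. apply tb_deriv; auto.
Qed.

Lemma tp_deriv' c x : is_derive (trig_poly k a b c) x (trig_poly k a b (dc c) x).
Proof. rewrite <- dtp_tp. apply tp_deriv. Qed.

Lemma tp_Derive c x : Derive (trig_poly k a b c) x = trig_poly k a b (dc c) x.
Proof. apply is_derive_unique, tp_deriv'. Qed.

Lemma tp_cont c x : continuous (trig_poly k a b c) x.
Proof. apply (ex_derive_continuous (trig_poly k a b c)). eexists. apply tp_deriv. Qed.

Lemma tp_per c : trig_poly k a b c b = trig_poly k a b c a.
Proof. unfold trig_poly. apply sum_n_ext. intros. rewrite tb_per; auto. Qed.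

End S2.

Section S3.
Variables (a b : R).
Hypothesis Hab : a < b.

Definition th (x : R) := 2 * PI * (x - a) / (b - a).
Definition pp (n : nat) : nat := match n with O => O | S m => S (Nat.div2 m) end.
Definition ph (n : nat) : R := match n with O => 0 | S m => if Nat.even m then 0 else - (PI / 2) end.

Lemma tb_cos n x : trig_basis a b n x = cos (INR (pp n) * th x + ph n).
Proof.
  destruct n as [|m].
  - simpl. rewrite Rmult_0_l, Rplus_0_r, cos_0. auto.
  - assert (b - a <> 0) by lra. rewrite tb_S by auto.
    change (pp (S m)) with (S (Nat.div2 m)). change (ph (S m)) with (if Nat.even m then 0 else - (PI / 2)).
    rewrite <- Nat.add_1_r. destruct (Nat.even m).
    + f_equal. unfold th, om. field. auto.
    + rewrite cos_plus, cos_neg, sin_neg, cos_PI2, sin_PI2.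
      replace (INR (Nat.div2 m + 1) * th x) with (om a b (Nat.div2 m) * (x - a)).
      ring. unfold th, om. field. auto.
Qed.

Lemma Icos m phi : (m > 0)%nat -> RInt (fun x => cos (INR m * th x + phi)) a b = 0.
Proof.
  intros Hm. assert (b - a <> 0) by lra.
  assert (HmR : INR m <> 0) by (apply not_0_INR; lia).
  assert (HP := PI_RGT_0).
  set (K := INR m * (2 * PI / (b - a))).
  assert (HK : K <> 0). { unfold K. apply Rmult_integral_contrapositive_currified; auto.
    apply Rmult_integral_contrapositive_currified; try lra. apply Rinv_neq_0_compat; auto. }
  apply is_RInt_unique.
  replace 0 with (minus ((fun x => sin (INR m * th x + phi) / K) b) ((fun x => sin (INR m * th x + phi) / K) a)).
  apply (is_RInt_derive (fun x => sin (INR m * th x + phi) / K)).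
  - intros x _. unfold th. auto_derive. auto. replace (INR m * (2 * PI * 1 * / (b - a))) with K by (unfold K; field; auto). unfold Rminus, Rdiv. field. auto.
  - intros x _. apply (ex_derive_continuous (fun x => cos (INR m * th x + phi))). unfold th. auto_derive. auto.
  - simpl. unfold th. replace (b - a) with (b - a) by ring.
    replace (2 * PI * (b - a) / (b - a)) with (2 * PI) by (field; auto).
    replace ((a - a)) with 0 by ring.
    replace (INR m * (2 * PI) + phi) with (phi + 2 * INR m * PI) by ring.
    rewrite sin_period. unfold minus, plus, opp. simpl. replace (INR m * (2 * PI * 0 / (b - a)) + phi) with phi by (field; auto). field. auto.
Qed.

End S3.

Lemma RInt_scal_R (f : R -> R) a b c : ex_RInt f a b -> RInt (fun x => c * f x) a b = c * RInt f a b.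
Proof. intros. exact (RInt_scal f a b c H). Qed.
Lemma RInt_plus_R (f g : R -> R) a b : ex_RInt f a b -> ex_RInt g a b -> RInt (fun x => f x + g x) a b = RInt f a b + RInt g a b.
Proof. intros. exact (RInt_plus f g a b H H0). Qed.
Lemma RInt_minus_R (f g : R -> R) a b : ex_RInt f a b -> ex_RInt g a b -> RInt (fun x => f x - g x) a b = RInt f a b - RInt g a b.
Proof. intros. exact (RInt_minus f g a b H H0). Qed.
Lemma RInt_const_R a b c : RInt (fun _ => c) a b = (b - a) * c.
Proof. exact (RInt_const a b c). Qed.
Lemma ex_RInt_cont (f : R -> R) a b : (forall x, continuous f x) -> ex_RInt f a b.
Proof. intros. apply (ex_RInt_continuous f). intros; auto. Qed.

Lemma prod_cos A B : cos A * cos B = / 2 * (cos (A - B) + cos (A + B)).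
Proof. rewrite cos_minus, cos_plus. field. Qed.


Section S3b.
Variables (a b : R).
Hypothesis Hab : a < b.

Lemma cont_cos r phi x : continuous (fun x => cos (r * th a b x + phi)) x.
Proof. apply (ex_derive_continuous (fun x => cos (r * th a b x + phi))). unfold th. auto_derive. auto. Qed.

Lemma ex_cos r phi : ex_RInt (fun x => cos (r * th a b x + phi)) a b.
Proof. apply ex_RInt_cont. intros; apply cont_cos. Qed.

Lemma Ir r phi : (exists m, (m > 0)%nat /\ (r = INR m \/ r = - INR m)) -> RInt (fun x => cos (r * th a b x + phi)) a b = 0.
Proof.
  intros [m [Hm [-> | ->]]]. apply Icos; auto.
  rewrite (RInt_ext _ (fun x => cos (INR m * th a b x + - phi))).
  apply Icos; auto. intros. rewrite <- cos_neg. f_equal. ring.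
Qed.

Lemma pos_r p q : (p + q > 0)%nat -> exists m, (m > 0)%nat /\ (INR p + INR q = INR m \/ INR p + INR q = - INR m).
Proof. intros. exists (p + q)%nat. split. lia. left. rewrite plus_INR. auto. Qed.

Lemma neq_r p q : p <> q -> exists m, (m > 0)%nat /\ (INR p - INR q = INR m \/ INR p - INR q = - INR m).
Proof.
  intros. destruct (Nat.lt_ge_cases p q).
  - exists (q - p)%nat. split. lia. right. rewrite minus_INR by lia. ring.
  - exists (p - q)%nat. split. lia. left. rewrite minus_INR by lia. ring.
Qed.

Lemma tb_prod n m x : trig_basis a b n x * trig_basis a b m x =
  / 2 * (cos ((INR (pp n) - INR (pp m)) * th a b x + (ph n - ph m)) + cos ((INR (pp n) + INR (pp m)) * th a b x + (ph n + ph m))).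
Proof.
  rewrite !tb_cos by auto. rewrite prod_cos.
  replace (INR (pp n) * th a b x + ph n - (INR (pp m) * th a b x + ph m)) with ((INR (pp n) - INR (pp m)) * th a b x + (ph n - ph m)) by ring.
  replace (INR (pp n) * th a b x + ph n + (INR (pp m) * th a b x + ph m)) with ((INR (pp n) + INR (pp m)) * th a b x + (ph n + ph m)) by ring.
  reflexivity.
Qed.

Lemma Iprod n m : RInt (fun x => trig_basis a b n x * trig_basis a b m x) a b =
  / 2 * (RInt (fun x => cos ((INR (pp n) - INR (pp m)) * th a b x + (ph n - ph m))) a b +
         RInt (fun x => cos ((INR (pp n) + INR (pp m)) * th a b x + (ph n + ph m))) a b).
Proof.
  rewrite (RInt_ext _ (fun x => / 2 * (cos ((INR (pp n) - INR (pp m)) * th a b x + (ph n - ph m)) + cos ((INR (pp n) + INR (pp m)) * th a b x + (ph n + ph m))))).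
  2: intros; apply tb_prod.
  rewrite RInt_scal_R. rewrite RInt_plus_R. reflexivity. apply ex_cos. apply ex_cos.
  apply ex_RInt_cont. intros. apply (continuous_plus (fun x => cos ((INR (pp n) - INR (pp m)) * th a b x + (ph n - ph m))) (fun x => cos ((INR (pp n) + INR (pp m)) * th a b x + (ph n + ph m)))); apply cont_cos.
Qed.

Lemma ortho n m : n <> m -> RInt (fun x => trig_basis a b n x * trig_basis a b m x) a b = 0.
Proof.
  intros Hnm. rewrite Iprod.
  destruct (Nat.eq_dec (pp n) (pp m)) as [E | E].
  - assert (Hp : (pp n > 0)%nat /\ cos (ph n - ph m) = 0).
    { destruct n as [|n']; destruct m as [|m']; try (simpl in E; discriminate); try congruence.
      simpl in E. injection E as E. split. cbn [pp]. apply Nat.lt_0_succ.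
      assert (Nat.even n' <> Nat.even m').
      { intro He. apply Hnm. f_equal. rewrite (Nat.div2_odd n'), (Nat.div2_odd m').
        rewrite <- !Nat.negb_even, He, E. auto. }
      simpl. destruct (Nat.even n'), (Nat.even m'); try congruence.
      + replace (0 - - (PI/2)) with (PI/2) by ring. apply cos_PI2.
      + replace (- (PI/2) - 0) with (- (PI/2)) by ring. rewrite cos_neg. apply cos_PI2. }
    destruct Hp as [Hp Hc].
    rewrite (Ir (INR (pp n) + INR (pp m))) by (apply pos_r; lia).
    rewrite (RInt_ext _ (fun _ => 0)). rewrite RInt_const_R. rewrite Rmult_0_r, Rplus_0_l, Rmult_0_r. reflexivity.
    intros. rewrite E, Rminus_diag, Rmult_0_l, Rplus_0_l. auto.
  - rewrite Ir by (apply neq_r; auto).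
    rewrite Ir. req; ring. apply pos_r. lia.
Qed.

Lemma norm_pos n : RInt (fun x => trig_basis a b n x ^ 2) a b > 0.
Proof.
  rewrite (RInt_ext _ (fun x => trig_basis a b n x * trig_basis a b n x)) by (intros; req; ring).
  rewrite Iprod.
  rewrite (RInt_ext (fun x => cos ((INR (pp n) - INR (pp n)) * th a b x + (ph n - ph n))) (fun _ => 1)).
  2:{ intros. rewrite !Rminus_diag, Rmult_0_l, Rplus_0_l. apply cos_0. }
  rewrite RInt_const_R.
  destruct n as [|n'].
  - rewrite (RInt_ext _ (fun _ => 1)). rewrite RInt_const_R. change (/2 * ((b - a) * 1 + (b - a) * 1) > 0). lra.
    intros. simpl. rewrite Rplus_0_l, Rmult_0_l, Rplus_0_l, cos_0. auto.
  - rewrite Ir. 2:{ apply pos_r. change (S (Nat.div2 n') + S (Nat.div2 n') > 0)%nat. rewrite Nat.add_succ_l. apply Nat.lt_0_succ. } change (/2 * ((b - a) * 1 + 0) > 0). lra.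
Qed.

End S3b.


Lemma sum_zero (F : nat -> R) N : (forall m, (m <= N)%nat -> F m = 0) -> sum_n F N = 0.
Proof.
  induction N; intros H. rewrite sum0; auto.
  rewrite sumS, IHN, H; auto. req; ring.
Qed.

Lemma sum_single (F : nat -> R) N n : (n <= N)%nat -> (forall m, (m <= N)%nat -> m <> n -> F m = 0) -> sum_n F N = F n.
Proof.
  induction N; intros Hn H.
  - rewrite sum0. replace n with 0%nat by lia. auto.
  - rewrite sumS. destruct (Nat.eq_dec n (S N)).
    + subst. rewrite sum_zero. req; ring. intros. apply H; lia.
    + rewrite IHN by (try lia; intros; apply H; lia). rewrite (H (S N)) by lia. req; ring.
Qed.

Lemma sum_ext_loc (F G : nat -> R) N : (forall m, (m <= N)%nat -> F m = G m) -> sum_n F N = sum_n G N.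
Proof. intros. apply sum_n_ext_loc. auto. Qed.

Lemma sum_mult_r (F : nat -> R) c N : sum_n F N * c = sum_n (fun n => F n * c) N.
Proof. induction N. rewrite !sum0; auto. rewrite !sumS, <- IHN. req; ring. Qed.
Lemma sum_mult_l (F : nat -> R) c N : c * sum_n F N = sum_n (fun n => c * F n) N.
Proof. induction N. rewrite !sum0; auto. rewrite !sumS, <- IHN. req; ring. Qed.
Lemma sum_plus (F G : nat -> R) N : sum_n F N + sum_n G N = sum_n (fun n => F n + G n) N.
Proof. induction N. rewrite !sum0; auto. rewrite !sumS, <- IHN. req; ring. Qed.

Lemma cont_sum (F : nat -> R -> R) N x : (forall n, continuous (F n) x) -> continuous (fun x => sum_n (fun n => F n x) N) x.
Proof.
  intros H. induction N.
  - apply continuous_ext with (F 0%nat). intros; symmetry; apply (sum0 (fun n => F n x0)). apply H.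
  - apply continuous_ext with (fun x => sum_n (fun n => F n x) N + F (S N) x). intros; symmetry; apply (sumS (fun n => F n x0)).
    apply (continuous_plus (fun x => sum_n (fun n => F n x) N) (F (S N))); auto.
Qed.

Section S4.
Variables (a b : R) (k : nat).
Hypothesis Hab : a < b.

Lemma RInt_sum (F : nat -> R -> R) N : (forall n x, continuous (F n) x) ->
  RInt (fun x => sum_n (fun n => F n x) N) a b = sum_n (fun n => RInt (F n) a b) N.
Proof.
  intros H. induction N.
  - rewrite sum0. apply RInt_ext. intros; apply sum0.
  - rewrite sumS.
    rewrite (RInt_ext _ (fun x => sum_n (fun n => F n x) N + F (S N) x)) by (intros; apply (sumS (fun n => F n x))).
    rewrite (RInt_plus_R (fun x => sum_n (fun n => F n x) N) (F (S N))). rewrite IHN. reflexivity.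
    apply ex_RInt_cont; intros. apply cont_sum; auto. apply ex_RInt_cont; auto.
Qed.

Lemma cont_tb n x : continuous (trig_basis a b n) x.
Proof. apply (ex_derive_continuous (trig_basis a b n)). eexists. apply tb_deriv; auto. Qed.

Lemma RInt_tp_mul c g : (forall x, continuous g x) ->
  RInt (fun x => trig_poly k a b c x * g x) a b = sum_n (fun n => c n * RInt (fun x => trig_basis a b n x * g x) a b) (2 * k).
Proof.
  intros Hg.
  rewrite (RInt_ext _ (fun x => sum_n (fun n => c n * (trig_basis a b n x * g x)) (2 * k))).
  2:{ intros. unfold trig_poly. rewrite sum_mult_r. apply sum_n_ext. intros; req; ring. }
  rewrite RInt_sum. apply sum_n_ext. intros. apply RInt_scal_R.
  apply ex_RInt_cont. intros. apply (continuous_mult (trig_basis a b n)); auto. apply cont_tb.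
  intros. apply (continuous_mult (fun _ => c n)). apply continuous_const.
  apply (continuous_mult (trig_basis a b n)); auto. apply cont_tb.
Qed.

Lemma SA c f : (forall x, continuous f x) ->
  RInt (fun x => trig_poly k a b c x * L2proj k a b f x) a b = RInt (fun x => trig_poly k a b c x * f x) a b.
Proof.
  intros Hf. rewrite !RInt_tp_mul; auto.
  2:{ intros. unfold L2proj. apply tp_cont; auto. }
  apply sum_ext_loc. intros n Hn. f_equal.
  unfold L2proj.
  rewrite (RInt_ext _ (fun x => trig_poly k a b (fun n0 : nat =>
      RInt (fun y : R => f y * trig_basis a b n0 y) a b / RInt (fun y : R => trig_basis a b n0 y ^ 2) a b) x * trig_basis a b n x)) by (intros; req; ring).
  rewrite RInt_tp_mul by (intros; apply cont_tb).
  rewrite (sum_single _ _ n); auto.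
  2:{ intros m Hm Hmn. rewrite ortho; auto. req; ring. }
  rewrite (RInt_ext (fun x => trig_basis a b n x * trig_basis a b n x) (fun y => trig_basis a b n y ^ 2)) by (intros; req; ring).
  rewrite (RInt_ext (fun x => trig_basis a b n x * f x) (fun y => f y * trig_basis a b n y)) by (intros; req; ring).
  assert (H := norm_pos a b Hab n). req. field. lra.
Qed.

End S4.

From Stdlib Require Import List.


Definition pr := ((R -> R) * (R -> R))%type.
Definition evc (g : (R -> R) -> R) (l : list pr) (x : R) : R :=
  fold_right (fun p acc => g (fst p) * snd p x + acc) 0 l.
Definition ev (l : list pr) (s x : R) : R := evc (fun f => f s) l x.
Definition Icoef (a b : R) (g : (R -> R) -> R) (l : list pr) : R :=
  fold_right (fun p acc => g (fst p) * RInt (snd p) a b + acc) 0 l.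
Definition Good (t : R) (l : list pr) : Prop :=
  List.Forall (fun p => ex_derive (fst p) t /\ forall x, continuous (snd p) x) l.

Lemma is_derive_mc (f : R -> R) t d c : is_derive f t d -> is_derive (fun s => f s * c) t (d * c).
Proof.
  intros H. apply is_derive_ext with (fun s => c * f s). intros; req; ring.
  replace (d * c) with (c * d) by (req; ring). apply is_derive_scal; auto.
Qed.

Lemma evc_cont g l x : List.Forall (fun p => forall x, continuous (snd p) x) l -> continuous (evc g l) x.
Proof.
  induction 1; simpl.
  - apply continuous_const.
  - apply (continuous_plus (fun x => g (fst x0) * snd x0 x) (evc g l)); auto.
    apply (continuous_mult (fun _ => g (fst x0)) (snd x0)); auto. apply continuous_const.
Qed.

Lemma RInt_evc a b g l : List.Forall (fun p => forall x, continuous (snd p) x) l -> RInt (evc g l) a b = Icoef a b g l.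
Proof.
  induction 1; simpl.
  - unfold evc. simpl. rewrite RInt_const_R. req; ring.
  - change (evc g (x :: l)) with (fun y => g (fst x) * snd x y + evc g l y).
    rewrite RInt_plus_R, RInt_scal_R, IHForall. reflexivity.
    apply ex_RInt_cont; auto.
    apply ex_RInt_cont; intros. apply (continuous_mult (fun _ => g (fst x)) (snd x)); auto. apply continuous_const.
    apply ex_RInt_cont; intros. apply evc_cont; auto.
Qed.

Lemma Good_cont t l : Good t l -> List.Forall (fun p => forall x, continuous (snd p) x) l.
Proof. intros H. eapply Forall_impl; [|exact H]. intros p [_ H']; auto. Qed.

Lemma Icoef_deriv a b t l : Good t l -> is_derive (fun s => Icoef a b (fun f => f s) l) t (Icoef a b (fun f => Derive f t) l).
Proof.
  induction 1; simpl.
  - apply (is_derive_const 0).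
  - destruct H as [H1 H2].
    apply (is_derive_plus (fun s => fst x s * RInt (snd x) a b) (fun s => Icoef a b (fun f => f s) l)); auto.
    apply is_derive_mc. apply Derive_correct; auto.
Qed.

Lemma ev_deriv t l x : Good t l -> is_derive (fun s => ev l s x) t (evc (fun f => Derive f t) l x).
Proof.
  induction 1; unfold ev; simpl.
  - apply (is_derive_const 0).
  - destruct H as [H1 H2].
    apply (is_derive_plus (fun s => fst x0 s * snd x0 x) (fun s => evc (fun f => f s) l x)); auto.
    apply is_derive_mc. apply Derive_correct; auto.
Qed.

Lemma leib_l a b t l : Good t l -> is_derive (fun s => RInt (fun x => ev l s x) a b) t (RInt (fun x => Derive (fun s => ev l s x) t) a b).
Proof.
  intros H.
  rewrite (RInt_ext _ (evc (fun f => Derive f t) l)) by (intros; apply is_derive_unique, ev_deriv; auto).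
  rewrite RInt_evc by (apply Good_cont with t; auto).
  apply is_derive_ext with (fun s => Icoef a b (fun f => f s) l).
  intros. unfold ev. rewrite <- RInt_evc. reflexivity. apply Good_cont with t; auto.
  apply Icoef_deriv; auto.
Qed.

Definition Sep (t : R) (f : R -> R -> R) : Prop := exists l, Good t l /\ forall s x, f s x = ev l s x.

Lemma leib a b t f : Sep t f -> is_derive (fun s => RInt (f s) a b) t (RInt (fun x => Derive (fun s => f s x) t) a b).
Proof.
  intros [l [Hl Hf]].
  rewrite (RInt_ext _ (fun x => Derive (fun s => ev l s x) t)).
  2:{ intros. apply Derive_ext. intros; auto. }
  apply is_derive_ext with (fun s => RInt (fun x => ev l s x) a b).
  intros. apply RInt_ext. intros. auto.
  apply leib_l; auto.
Qed.

Lemma Sep_ext t f g : Sep t f -> (forall s x, g s x = f s x) -> Sep t g.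
Proof. intros [l [H1 H2]] H. exists l. split; auto. intros. rewrite H; auto. Qed.

Lemma ev_app l1 l2 s x : ev (l1 ++ l2) s x = ev l1 s x + ev l2 s x.
Proof. induction l1; unfold ev in *; simpl. req; ring. rewrite IHl1. req; ring. Qed.

Lemma Sep_plus t f g : Sep t f -> Sep t g -> Sep t (fun s x => f s x + g s x).
Proof.
  intros [l1 [H1 E1]] [l2 [H2 E2]]. exists (l1 ++ l2). split.
  apply Forall_app; auto. intros. rewrite ev_app, E1, E2. auto.
Qed.

Definition pm (p q : pr) : pr := (fun s => fst p s * fst q s, fun x => snd p x * snd q x).
Definition lmul (l1 l2 : list pr) : list pr := flat_map (fun p => map (pm p) l2) l1.

Lemma ev_map p l s x : ev (map (pm p) l) s x = fst p s * snd p x * ev l s x.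
Proof. induction l; unfold ev in *; simpl. req; ring. rewrite IHl. req; ring. Qed.

Lemma ev_lmul l1 l2 s x : ev (lmul l1 l2) s x = ev l1 s x * ev l2 s x.
Proof.
  induction l1; unfold lmul in *; simpl. unfold ev; simpl; req; ring.
  rewrite ev_app, ev_map, IHl1. unfold ev; simpl. req; ring.
Qed.

Lemma Good_lmul t l1 l2 : Good t l1 -> Good t l2 -> Good t (lmul l1 l2).
Proof.
  intros H1 H2. unfold lmul. induction H1; simpl. constructor.
  apply Forall_app. split; auto.
  apply Forall_map. eapply Forall_impl; [|exact H2]. intros q [Hq1 Hq2]. destruct H as [Hx1 Hx2].
  unfold pm; simpl. split.
  apply (ex_derive_mult (fst x) (fst q)); auto.
  intros. apply (continuous_mult (snd x) (snd q)); auto.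
Qed.

Lemma Sep_mult t f g : Sep t f -> Sep t g -> Sep t (fun s x => f s x * g s x).
Proof.
  intros [l1 [H1 E1]] [l2 [H2 E2]]. exists (lmul l1 l2). split.
  apply Good_lmul; auto. intros. rewrite ev_lmul, E1, E2. auto.
Qed.

Lemma Sep_x t (h : R -> R) : (forall x, continuous h x) -> Sep t (fun s x => h x).
Proof.
  intros. exists ((fun _ => 1, h) :: nil). split.
  constructor; [|constructor]. simpl. split; auto. apply ex_derive_const.
  intros. unfold ev; simpl. req; ring.
Qed.

Lemma Sep_t t (g : R -> R) : ex_derive g t -> Sep t (fun s x => g s).
Proof.
  intros. exists ((g, fun _ => 1) :: nil). split.
  constructor; [|constructor]. simpl. split; auto. intros; apply continuous_const.
  intros. unfold ev; simpl. req; ring.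
Qed.

Lemma Sep_const t c : Sep t (fun s x => c).
Proof. apply Sep_t. apply ex_derive_const. Qed.

Lemma Sep_sum t (F : nat -> R -> R -> R) N : (forall n, (n <= N)%nat -> Sep t (F n)) ->
  Sep t (fun s x => sum_n (fun n => F n s x) N).
Proof.
  induction N; intros H.
  - apply Sep_ext with (F 0%nat). apply H; auto. intros. apply (sum0 (fun n => F n s x)).
  - apply Sep_ext with (fun s x => sum_n (fun n => F n s x) N + F (S N) s x).
    apply Sep_plus. apply IHN. intros; apply H; lia. apply H; lia.
    intros. apply (sumS (fun n => F n s x)).
Qed.


Lemma D_eq (f : R -> R) t l1 l2 : is_derive f t l1 -> l1 = l2 -> is_derive f t l2.
Proof. intros; subst; auto. Qed.
Lemma D_plus (f g : R -> R) t a1 b1 : is_derive f t a1 -> is_derive g t b1 -> is_derive (fun s => f s + g s) t (a1 + b1).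
Proof. intros. apply (is_derive_plus f g); auto. Qed.
Lemma D_minus (f g : R -> R) t a1 b1 : is_derive f t a1 -> is_derive g t b1 -> is_derive (fun s => f s - g s) t (a1 - b1).
Proof. intros. apply (is_derive_minus f g); auto. Qed.
Lemma D_mult (f g : R -> R) t a1 b1 : is_derive f t a1 -> is_derive g t b1 -> is_derive (fun s => f s * g s) t (a1 * g t + f t * b1).
Proof. intros. apply (is_derive_mult f g); auto. intros; apply Rmult_comm. Qed.
Lemma D_sq (f : R -> R) t a1 : is_derive f t a1 -> is_derive (fun s => f s ^ 2) t (2 * f t * a1).
Proof. intros. apply D_eq with (INR 2 * a1 * f t ^ Nat.pred 2). apply (is_derive_pow f 2); auto. simpl; req; ring. Qed.
Lemma D_cm (f : R -> R) t c a1 : is_derive f t a1 -> is_derive (fun s => c * f s) t (c * a1).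
Proof. intros. apply is_derive_scal; auto. Qed.

Lemma C_plus (f g : R -> R) x : continuous f x -> continuous g x -> continuous (fun y => f y + g y) x.
Proof. intros; apply (continuous_plus f g); auto. Qed.
Lemma C_minus (f g : R -> R) x : continuous f x -> continuous g x -> continuous (fun y => f y - g y) x.
Proof. intros; apply (continuous_minus f g); auto. Qed.
Lemma C_mult (f g : R -> R) x : continuous f x -> continuous g x -> continuous (fun y => f y * g y) x.
Proof. intros; apply (continuous_mult f g); auto. Qed.
Lemma C_sq (f : R -> R) x : continuous f x -> continuous (fun y => f y ^ 2) x.
Proof. intros. apply continuous_ext with (fun y => f y * f y). intros; simpl; req; ring. apply C_mult; auto. Qed.
Lemma C_const (c x : R) : continuous (fun _ : R => c) x.
Proof. apply continuous_const. Qed.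
Lemma C_tp k a b c x : a < b -> continuous (fun y => trig_poly k a b c y) x.
Proof. intros. apply continuous_ext with (trig_poly k a b c). auto. apply tp_cont; auto. Qed.
Lemma C_L2 k a b f x : a < b -> continuous (fun y => L2proj k a b f y) x.
Proof. intros. unfold L2proj. apply C_tp; auto. Qed.

Ltac cont6 := repeat first [ apply C_plus | apply C_minus | apply C_mult | apply C_sq | (apply C_tp; assumption) | (apply C_L2; assumption) | apply C_const ].

Lemma tp_D2 k a b c x : a < b -> Derive_n (trig_poly k a b c) 2 x = trig_poly k a b (dc a b (dc a b c)) x.
Proof.
  intros Hab. simpl.
  rewrite (Derive_ext _ (trig_poly k a b (dc a b c))). apply tp_Derive; auto.
  intros. rewrite (Derive_ext _ (trig_poly k a b c)) by auto. apply tp_Derive; auto.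
Qed.

Lemma zero_int k a b (E G dG : R -> R) (u1 : nat -> R) (f1 : R -> R) (u2 : nat -> R) (f2 : R -> R) (c1 c2 : R) : a < b ->
  (forall x, is_derive G x (dG x)) -> (forall x, continuous dG x) -> G b = G a ->
  (forall x, continuous f1 x) -> (forall x, continuous f2 x) ->
  (forall x, a < x < b -> E x = dG x + c1 * (trig_poly k a b u1 x * L2proj k a b f1 x - trig_poly k a b u1 x * f1 x)
                                     + c2 * (trig_poly k a b u2 x * L2proj k a b f2 x - trig_poly k a b u2 x * f2 x)) ->
  RInt E a b = 0.
Proof.
  intros Hab HG HdG Hper Hf1 Hf2 HE.
  rewrite (RInt_ext _ (fun x => dG x + c1 * (trig_poly k a b u1 x * L2proj k a b f1 x - trig_poly k a b u1 x * f1 x)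
                                     + c2 * (trig_poly k a b u2 x * L2proj k a b f2 x - trig_poly k a b u2 x * f2 x))).
  2:{ intros x Hx. rewrite Rmin_left, Rmax_right in Hx by lra. auto. }
  assert (Cu : forall u (f : R -> R) x, continuous f x -> continuous (fun y => trig_poly k a b u y * f y) x).
  { intros. apply C_mult; auto. apply C_tp; auto. }
  assert (Cu2 : forall u f x, continuous (fun y => trig_poly k a b u y * L2proj k a b f y) x).
  { intros. apply C_mult; [apply C_tp | apply C_L2]; auto. }
  assert (HI : RInt dG a b = 0).
  { apply is_RInt_unique. replace 0 with (minus (G b) (G a)). apply (is_RInt_derive G dG); auto.
    rewrite Hper. unfold minus, plus, opp; simpl. req; ring. }
  assert (HS : forall u f c, (forall x, continuous f x) -> RInt (fun x => c * (trig_poly k a b u x * L2proj k a b f x - trig_poly k a b u x * f x)) a b = 0).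
  { intros. rewrite RInt_scal_R. rewrite RInt_minus_R. rewrite SA; auto. req; ring.
    apply ex_RInt_cont; auto. apply ex_RInt_cont; auto.
    apply ex_RInt_cont; intros. apply C_minus; auto. }
  rewrite RInt_plus_R. rewrite RInt_plus_R. rewrite HI, !HS; auto. req; ring.
  apply ex_RInt_cont; auto.
  apply ex_RInt_cont; intros. apply C_mult. apply C_const. apply C_minus; auto.
  apply ex_RInt_cont; intros. apply C_plus; auto. apply C_mult. apply C_const. apply C_minus; auto.
  apply ex_RInt_cont; intros. apply C_mult. apply C_const. apply C_minus; auto.
Qed.


Lemma cont_de a b n x : continuous (de a b n) x.
Proof.
  apply (ex_derive_continuous (de a b n)). destruct n as [|m]. apply ex_derive_const. unfold de. destruct (Nat.even m); auto_derive; auto. Qed.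

Lemma Sep_minus t f g : Sep t f -> Sep t g -> Sep t (fun s x => f s x - g s x).
Proof.
  intros. apply Sep_ext with (fun s x => f s x + (-1) * g s x).
  apply Sep_plus; auto. apply Sep_mult; auto. apply Sep_const. intros; req; ring.
Qed.
Lemma Sep_sq t f : Sep t f -> Sep t (fun s x => f s x ^ 2).
Proof. intros. apply Sep_ext with (fun s x => f s x * f s x). apply Sep_mult; auto. intros; req; ring. Qed.

Section S7.
Variables (a b : R) (k : nat) (t : R).
Hypothesis Hab : a < b.

Lemma TP_dt (c : nat -> R -> R) x : (forall n, (n <= 2 * k)%nat -> ex_derive (c n) t) ->
  is_derive (fun s => trig_poly k a b (fun n => c n s) x) t (trig_poly k a b (fun n => Derive (c n) t) x).
Proof.
  intros H. unfold trig_poly.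
  apply (is_derive_sum_n (fun n s => c n s * trig_basis a b n x)).
  intros. apply is_derive_mc. apply Derive_correct; auto.
Qed.

Lemma TP_Dx (c : nat -> R) x : Derive (trig_poly k a b c) x = dtp a b k c x.
Proof. apply is_derive_unique. apply tp_deriv; auto. Qed.

Lemma TP_dxdt (c : nat -> R -> R) x : (forall n, (n <= 2 * k)%nat -> ex_derive (c n) t) ->
  is_derive (fun s => Derive (trig_poly k a b (fun n => c n s)) x) t (trig_poly k a b (dc a b (fun n => Derive (c n) t)) x).
Proof.
  intros H. apply is_derive_ext with (fun s => dtp a b k (fun n => c n s) x).
  intros. rewrite TP_Dx. auto.
  rewrite <- dtp_tp by auto. unfold dtp.
  apply (is_derive_sum_n (fun n s => c n s * de a b n x)).
  intros. apply is_derive_mc. apply Derive_correct; auto.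
Qed.

Lemma TP_Sep (c : nat -> R -> R) : (forall n, (n <= 2 * k)%nat -> ex_derive (c n) t) ->
  Sep t (fun s x => trig_poly k a b (fun n => c n s) x).
Proof.
  intros H. apply Sep_ext with (fun s x => sum_n (fun n => c n s * trig_basis a b n x) (2 * k)).
  apply Sep_sum. intros. apply Sep_mult. apply Sep_t; auto. apply Sep_x. intros; apply cont_tb; auto.
  intros. reflexivity.
Qed.

Lemma TPx_Sep (c : nat -> R -> R) : (forall n, (n <= 2 * k)%nat -> ex_derive (c n) t) ->
  Sep t (fun s x => Derive (trig_poly k a b (fun n => c n s)) x).
Proof.
  intros H. apply Sep_ext with (fun s x => sum_n (fun n => c n s * de a b n x) (2 * k)).
  apply Sep_sum. intros. apply Sep_mult. apply Sep_t; auto. apply Sep_x. intros; apply cont_de.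
  intros. rewrite TP_Dx. reflexivity.
Qed.

End S7.

Ltac cont := repeat match goal with
 | |- continuous (fun y => trig_poly _ _ _ _ y) _ => apply C_tp; assumption
 | |- continuous (fun y => L2proj _ _ _ _ y) _ => apply C_L2; assumption
 | |- continuous (fun y => @?A y + @?B y) _ => apply (C_plus A B)
 | |- continuous (fun y => @?A y - @?B y) _ => apply (C_minus A B)
 | |- continuous (fun y => @?A y * @?B y) _ => apply (C_mult A B)
 | |- continuous (fun y => @?A y ^ 2) _ => apply (C_sq A)
 | |- continuous (fun _ => ?c) _ => apply C_const
 end.
Ltac sep := repeat match goal with
 | |- Sep _ (fun s x => trig_poly _ _ _ (fun n => _ n s) x) => apply TP_Sep; assumption
 | |- Sep _ (fun s x => Derive (trig_poly _ _ _ (fun n => _ n s)) x) => apply TPx_Sep; assumption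
 | |- Sep _ (fun s x => @?A s x + @?B s x) => apply (Sep_plus _ A B)
 | |- Sep _ (fun s x => @?A s x - @?B s x) => apply (Sep_minus _ A B)
 | |- Sep _ (fun s x => @?A s x * @?B s x) => apply (Sep_mult _ A B)
 | |- Sep _ (fun s x => @?A s x ^ 2) => apply (Sep_sq _ A)
 | |- Sep _ (fun _ _ => ?c) => apply Sep_const
 end.

Ltac dd := repeat match goal with
 | |- is_derive (fun s => trig_poly _ _ _ (fun n => _ n s) _) _ _ => apply TP_dt; assumption
 | |- is_derive (fun s => Derive (trig_poly _ _ _ (fun n => _ n s)) _) _ _ => apply TP_dxdt; assumption
 | |- is_derive (fun y => trig_poly _ _ _ _ y) _ _ => refine (tp_deriv' _ _ _ _ _ _); assumption
 | |- is_derive (fun y => 2 * @?A y) _ _ => apply (D_cm A)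
 | |- is_derive (fun y => ?c / 2 * @?A y) _ _ => apply (D_cm A)
 | |- is_derive (fun y => @?A y + @?B y) _ _ => apply (D_plus A B)
 | |- is_derive (fun y => @?A y - @?B y) _ _ => apply (D_minus A B)
 | |- is_derive (fun y => @?A y * @?B y) _ _ => apply (D_mult A B)
 | |- is_derive (fun y => @?A y ^ 2) _ _ => apply (D_sq A)
 end.

Section S8.
Variables (a b beta : R) (k : nat) (cv cw : nat -> R -> R) (t : R).
Hypothesis Hab : a < b.
Hypothesis Hdv : forall n, (n <= 2 * k)%nat -> ex_derive (cv n) t.
Hypothesis Hdw : forall n, (n <= 2 * k)%nat -> ex_derive (cw n) t.

Local Notation V := (trig_poly k a b (fun n => cv n t)).
Local Notation W := (trig_poly k a b (fun n => cw n t)).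
Local Notation Vx := (trig_poly k a b (dc a b (fun n => cv n t))).
Local Notation Wx := (trig_poly k a b (dc a b (fun n => cw n t))).
Local Notation Vxx := (trig_poly k a b (dc a b (dc a b (fun n => cv n t)))).
Local Notation Wxx := (trig_poly k a b (dc a b (dc a b (fun n => cw n t)))).
Local Notation Vt := (trig_poly k a b (fun n => Derive (cv n) t)).
Local Notation Wt := (trig_poly k a b (fun n => Derive (cw n) t)).
Local Notation Vtx := (trig_poly k a b (dc a b (fun n => Derive (cv n) t))).
Local Notation Wtx := (trig_poly k a b (dc a b (fun n => Derive (cw n) t))).
Local Notation P1 := (L2proj k a b (fun y => (V y ^ 2 + W y ^ 2) * V y)).
Local Notation P2 := (L2proj k a b (fun y => (V y ^ 2 + W y ^ 2) * W y)).

Hypothesis Heq : forall x, a <= x < b ->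
  Derive (fun s => trig_poly k a b (fun n => cv n s) x) t =
    - Derive_n W 2 x - beta * P2 x /\
  Derive (fun s => trig_poly k a b (fun n => cw n s) x) t =
    Derive_n V 2 x + beta * P1 x.

Lemma Heq' x : a < x < b -> Vt x = - Wxx x - beta * P2 x /\ Wt x = Vxx x + beta * P1 x.
Proof.
  intros Hx. destruct (Heq x) as [E1 E2]. lra.
  split.
  - rewrite <- (is_derive_unique _ _ _ (TP_dt a b k t cv x Hdv)).
    rewrite <- tp_D2 by auto. exact E1.
  - rewrite <- (is_derive_unique _ _ _ (TP_dt a b k t cw x Hdw)).
    rewrite <- tp_D2 by auto. exact E2.
Qed.

Lemma D x : is_derive (trig_poly k a b (fun n => cv n t)) x (Vx x).
Proof. apply tp_deriv'; auto. Qed.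

Lemma mass_d : is_derive (fun s => mass a b (trig_poly k a b (fun n => cv n s)) (trig_poly k a b (fun n => cw n s))) t 0.
Proof.
  apply D_eq with (RInt (fun x => Derive (fun s => trig_poly k a b (fun n => cv n s) x ^ 2 + trig_poly k a b (fun n => cw n s) x ^ 2) t) a b).
  apply (leib a b t (fun s x => trig_poly k a b (fun n => cv n s) x ^ 2 + trig_poly k a b (fun n => cw n s) x ^ 2)).
  sep.
  apply (zero_int k a b _ (fun x => 2 * (W x * Vx x - V x * Wx x))
    (fun x => 2 * ((Wx x * Vx x + W x * Vxx x) - (Vx x * Wx x + V x * Wxx x)))
    (fun n => cw n t) (fun y => (V y ^ 2 + W y ^ 2) * V y)
    (fun n => cv n t) (fun y => (V y ^ 2 + W y ^ 2) * W y) (2 * beta) (- 2 * beta)).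
  - exact Hab.
  - intros x. eapply D_eq. apply D_cm. apply D_minus; apply D_mult; apply tp_deriv'; auto.
    cbv beta. req; ring.
  - intros; cont.
  - rewrite !tp_per by auto. auto.
  - intros; cont.
  - intros; cont.
  - intros x Hx. erewrite is_derive_unique.
    2:{ apply D_plus; apply D_sq; apply TP_dt; auto. }
    destruct (Heq' x Hx) as [E1 E2]. rewrite E1, E2. req; ring.
Qed.

Lemma mom_d : is_derive (fun s => momentum a b (trig_poly k a b (fun n => cv n s)) (trig_poly k a b (fun n => cw n s))) t 0.
Proof.
  apply D_eq with (RInt (fun x => Derive (fun s => trig_poly k a b (fun n => cv n s) x * Derive (trig_poly k a b (fun n => cw n s)) x - trig_poly k a b (fun n => cw n s) x * Derive (trig_poly k a b (fun n => cv n s)) x) t) a b).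
  apply (leib a b t (fun s x => trig_poly k a b (fun n => cv n s) x * Derive (trig_poly k a b (fun n => cw n s)) x - trig_poly k a b (fun n => cw n s) x * Derive (trig_poly k a b (fun n => cv n s)) x)).
  sep.
  apply (zero_int k a b _ (fun x => V x * Wt x - W x * Vt x - Vx x ^ 2 - Wx x ^ 2 - beta / 2 * (V x ^ 2 + W x ^ 2) ^ 2)
    (fun x => Vx x * Wt x + V x * Wtx x - (Wx x * Vt x + W x * Vtx x) - 2 * Vx x * Vxx x - 2 * Wx x * Wxx x
              - beta / 2 * (2 * (V x ^ 2 + W x ^ 2) * (2 * V x * Vx x + 2 * W x * Wx x)))
    (dc a b (fun n => cw n t)) (fun y => (V y ^ 2 + W y ^ 2) * W y)
    (dc a b (fun n => cv n t)) (fun y => (V y ^ 2 + W y ^ 2) * V y) (- 2 * beta) (- 2 * beta)).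
  - exact Hab.
  - intros x. eapply D_eq. dd. cbv beta. req; field.
  - intros; cont.
  - rewrite !tp_per by auto. auto.
  - intros; cont.
  - intros; cont.
  - intros x Hx. erewrite is_derive_unique.
    2:{ dd. }
    cbv beta. rewrite !tp_Derive by auto.
    destruct (Heq' x Hx) as [E1 E2]. rewrite E1, E2. req; field.
Qed.

Lemma en_d : is_derive (fun s => energy a b beta (trig_poly k a b (fun n => cv n s)) (trig_poly k a b (fun n => cw n s))) t 0.
Proof.
  apply D_eq with (RInt (fun x => Derive (fun s => Derive (trig_poly k a b (fun n => cv n s)) x ^ 2 + Derive (trig_poly k a b (fun n => cw n s)) x ^ 2
                 - beta / 2 * (trig_poly k a b (fun n => cv n s) x ^ 2 + trig_poly k a b (fun n => cw n s) x ^ 2) ^ 2) t) a b).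
  apply (leib a b t (fun s x => Derive (trig_poly k a b (fun n => cv n s)) x ^ 2 + Derive (trig_poly k a b (fun n => cw n s)) x ^ 2
                 - beta / 2 * (trig_poly k a b (fun n => cv n s) x ^ 2 + trig_poly k a b (fun n => cw n s) x ^ 2) ^ 2)).
  sep.
  apply (zero_int k a b _ (fun x => 2 * Vx x * Vt x + 2 * Wx x * Wt x)
    (fun x => 2 * (Vxx x * Vt x + Vx x * Vtx x) + 2 * (Wxx x * Wt x + Wx x * Wtx x))
    (fun n => Derive (cv n) t) (fun y => (V y ^ 2 + W y ^ 2) * V y)
    (fun n => Derive (cw n) t) (fun y => (V y ^ 2 + W y ^ 2) * W y) (2 * beta) (2 * beta)).
  - exact Hab.
  - intros x. eapply D_eq. dd. cbv beta. req; field.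
  - intros; cont.
  - rewrite !tp_per by auto. auto.
  - intros; cont.
  - intros; cont.
  - intros x Hx. erewrite is_derive_unique.
    2:{ dd. }
    cbv beta. rewrite !tp_Derive by auto.
    destruct (Heq' x Hx) as [E1 E2]. rewrite E1, E2. req; field.
Qed.

End S8.

Lemma const_on (F : R -> R) lo hi : (forall t, in_open_interval lo hi t -> is_derive F t 0) ->
  forall t1 t2, in_open_interval lo hi t1 -> in_open_interval lo hi t2 -> F t1 = F t2.
Proof.
  intros HF.
  assert (K : forall t1 t2, t1 < t2 -> in_open_interval lo hi t1 -> in_open_interval lo hi t2 -> F t1 = F t2).
  { intros t1 t2 h [A1 B1] [A2 B2]. apply (eq_is_derive F); auto.
    intros s [S1 S2]. apply HF. split.
    - apply (Rbar_lt_le_trans lo (Finite t1) (Finite s)); auto.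
    - apply (Rbar_le_lt_trans (Finite s) (Finite t2) hi); auto. }
  intros t1 t2 H1 H2. destruct (Rtotal_order t1 t2) as [h|[h|h]].
  - apply K; auto.
  - subst; auto.
  - symmetry; apply K; auto.
Qed.

Theorem theorem2p3 (a b beta : R) (k : nat) (lo hi : Rbar)
  (cv cw : nat -> R -> R) :
  a < b ->
  (forall n t, (n <= 2 * k)%nat -> in_open_interval lo hi t ->
     ex_derive (cv n) t /\ continuous (Derive (cv n)) t /\
     ex_derive (cw n) t /\ continuous (Derive (cw n)) t) ->
  let v := fun t x => trig_poly k a b (fun n => cv n t) x in
  let w := fun t x => trig_poly k a b (fun n => cw n t) x in
  (forall t x, in_open_interval lo hi t -> a <= x < b ->
     Derive (fun s => v s x) t =
       - Derive_n (w t) 2 x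
       - beta * L2proj k a b (fun y => (v t y ^ 2 + w t y ^ 2) * w t y) x
     /\
     Derive (fun s => w s x) t =
         Derive_n (v t) 2 x
       + beta * L2proj k a b (fun y => (v t y ^ 2 + w t y ^ 2) * v t y) x) ->
  forall t1 t2, in_open_interval lo hi t1 -> in_open_interval lo hi t2 ->
    mass a b (v t1) (w t1) = mass a b (v t2) (w t2) /\
    momentum a b (v t1) (w t1) = momentum a b (v t2) (w t2) /\
    energy a b beta (v t1) (w t1) = energy a b beta (v t2) (w t2).
Proof.
  intros Hab Hreg v w Heq t1 t2 H1 H2.
  assert (Hdv : forall t, in_open_interval lo hi t -> forall n, (n <= 2 * k)%nat -> ex_derive (cv n) t)
    by (intros; apply Hreg; auto).
  assert (Hdw : forall t, in_open_interval lo hi t -> forall n, (n <= 2 * k)%nat -> ex_derive (cw n) t)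
    by (intros; apply Hreg; auto).
  split; [|split].
  - apply (const_on (fun s => mass a b (v s) (w s)) lo hi); auto.
    intros t Ht. exact (mass_d a b beta k cv cw t Hab (Hdv t Ht) (Hdw t Ht) (fun x Hx => Heq t x Ht Hx)).
  - apply (const_on (fun s => momentum a b (v s) (w s)) lo hi); auto.
    intros t Ht. exact (mom_d a b beta k cv cw t Hab (Hdv t Ht) (Hdw t Ht) (fun x Hx => Heq t x Ht Hx)).
  - apply (const_on (fun s => energy a b beta (v s) (w s)) lo hi); auto.
    intros t Ht. exact (en_d a b beta k cv cw t Hab (Hdv t Ht) (Hdw t Ht) (fun x Hx => Heq t x Ht Hx)).
Qed.
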